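(* Let $H$ be an affine algebraic group acting regularly on an irreducible affine variety $X$ over an algebraically closed field $\Bbbk$, and suppose that ${}^H\Bbbk[X]$ is a finitely generated $\Bbbk$--algebra. Let $\pi:X\to X/_{\mathrm{aff}}H$ be the affinized quotient. If every fiber of $\pi$ is a single (closed) $H$--orbit, then the action of $H$ on $X$ is observable.
   Context: $H$ acts on $\Bbbk[X]$ by $(x\cdot f)(p)=f(x^{-1}p)$ (any convention for the induced action gives the same invariants); ${}^H\Bbbk[X]$ is the algebra of $H$--invariant regular functions. When it is finitely generated, $X/_{\mathrm{aff}}H$ is the affine variety with coordinate ring ${}^H\Bbbk[X]$ and $\pi$ is the morphism corresponding to the inclusion ${}^H\Bbbk[X]\subseteq\Bbbk[X]$. The action of $H$ on $X$ is observable if for every $H$--stable closed subset $Y\subsetneq X$ there exists a nonzero $f\in{}^H\Bbbk[X]$ vanishing on $Y$. *)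

(* Defs.v *)
(* Affine varieties are modelled concretely as Zariski-closed
   subsets of k^n = 'rV[k]_n; regular functions are restrictions of polynomial
   functions (the subring of k^n -> k generated by constants and coordinates). *)
From HB Require Import structures.
From mathcomp Require Import all_boot all_order all_algebra.
Set Implicit Arguments. Unset Strict Implicit. Unset Printing Implicit Defensive.
Import GRing.Theory.
Local Open Scope ring_scope.

Section AffineDefs.
Variable k : fieldType.

Inductive polyfun (n : nat) : ('rV[k]_n -> k) -> Prop :=
| PFconst (c : k) : polyfun (fun _ => c)
| PFcoord (i : 'I_n) : polyfun (fun x => x ord0 i)
| PFadd f g : polyfun f -> polyfun g -> polyfun (fun x => f x + g x)
| PFmul f g : polyfun f -> polyfun g -> polyfun (fun x => f x * g x)
| PFext f g : polyfun f -> (forall x, f x = g x) -> polyfun g.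

Definition zclosed n (Z : 'rV[k]_n -> Prop) : Prop :=
  exists S : ('rV[k]_n -> k) -> Prop,
    (forall f, S f -> polyfun f) /\ (forall x, Z x <-> forall f, S f -> f x = 0).

Definition irreducible_variety n (X : 'rV[k]_n -> Prop) : Prop :=
  [/\ zclosed X, exists x, X x &
      forall Z1 Z2 : 'rV[k]_n -> Prop, zclosed Z1 -> zclosed Z2 ->
        (forall x, X x -> Z1 x \/ Z2 x) ->
        (forall x, X x -> Z1 x) \/ (forall x, X x -> Z2 x)].

Definition regular_on n (X : 'rV[k]_n -> Prop) (f : 'rV[k]_n -> k) : Prop :=
  exists p, polyfun p /\ forall x, X x -> f x = p x.

Definition morphism_on n m (X : 'rV[k]_n -> Prop) (F : 'rV[k]_n -> 'rV[k]_m) : Prop :=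
  forall j : 'I_m, regular_on X (fun x => F x ord0 j).

Definition prod_set m n (A : 'rV[k]_m -> Prop) (B : 'rV[k]_n -> Prop)
  : 'rV[k]_(m + n) -> Prop := fun z => A (lsubmx z) /\ B (rsubmx z).

Definition affine_algebraic_group m (G : 'rV[k]_m -> Prop) (e : 'rV[k]_m)
  (mul : 'rV[k]_m -> 'rV[k]_m -> 'rV[k]_m) (inv : 'rV[k]_m -> 'rV[k]_m) : Prop :=
  [/\ zclosed G, G e,
      (forall g h, G g -> G h -> G (mul g h)) /\ (forall g, G g -> G (inv g)),
      (forall g h l, G g -> G h -> G l -> mul g (mul h l) = mul (mul g h) l)
      /\ (forall g, G g -> mul e g = g /\ mul g e = g)
      /\ (forall g, G g -> mul (inv g) g = e /\ mul g (inv g) = e)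
    & morphism_on (prod_set G G) (fun z => mul (lsubmx z) (rsubmx z))
      /\ morphism_on G inv].

Definition regular_action m n (G : 'rV[k]_m -> Prop) (e : 'rV[k]_m)
  (mul : 'rV[k]_m -> 'rV[k]_m -> 'rV[k]_m) (X : 'rV[k]_n -> Prop)
  (act : 'rV[k]_m -> 'rV[k]_n -> 'rV[k]_n) : Prop :=
  [/\ forall g x, G g -> X x -> X (act g x),
      forall x, X x -> act e x = x,
      forall g h x, G g -> G h -> X x -> act (mul g h) x = act g (act h x)
    & morphism_on (prod_set G X) (fun z => act (lsubmx z) (rsubmx z))].

Definition invariant_fun m n (G : 'rV[k]_m -> Prop) (X : 'rV[k]_n -> Prop)
  (act : 'rV[k]_m -> 'rV[k]_n -> 'rV[k]_n) (f : 'rV[k]_n -> k) : Prop :=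
  regular_on X f /\ forall g x, G g -> X x -> f (act g x) = f x.

Definition quot_map n r (f : 'I_r -> 'rV[k]_n -> k) (x : 'rV[k]_n) : 'rV[k]_r :=
  \row_i f i x.

Definition generates_invariants m n (G : 'rV[k]_m -> Prop) (X : 'rV[k]_n -> Prop)
  (act : 'rV[k]_m -> 'rV[k]_n -> 'rV[k]_n) r (f : 'I_r -> 'rV[k]_n -> k) : Prop :=
  (forall i, invariant_fun G X act (f i)) /\
  forall g, invariant_fun G X act g ->
    exists P : 'rV[k]_r -> k, polyfun P /\ forall x, X x -> g x = P (quot_map f x).

(* X/_aff H realised in k^r via the generators: the Zariski closure of the
   image of quot_map f, whose coordinate ring is k[f_1,...,f_r] = ^H k[X];
   pi = quot_map f. *)
Definition aff_quotient n (X : 'rV[k]_n -> Prop) r (f : 'I_r -> 'rV[k]_n -> k)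
  : 'rV[k]_r -> Prop :=
  fun y => forall P, polyfun P -> (forall x, X x -> P (quot_map f x) = 0) -> P y = 0.

Definition h_orbit m n (G : 'rV[k]_m -> Prop) (act : 'rV[k]_m -> 'rV[k]_n -> 'rV[k]_n)
  (x0 x : 'rV[k]_n) : Prop := exists g, G g /\ x = act g x0.

Definition observable m n (G : 'rV[k]_m -> Prop) (X : 'rV[k]_n -> Prop)
  (act : 'rV[k]_m -> 'rV[k]_n -> 'rV[k]_n) : Prop :=
  forall Y : 'rV[k]_n -> Prop, zclosed Y -> (forall y, Y y -> X y) ->
    (forall g y, G g -> Y y -> Y (act g y)) -> (exists x, X x /\ ~ Y x) ->
    exists f, [/\ invariant_fun G X act f, (exists x, X x /\ f x <> 0)
              & forall y, Y y -> f y = 0].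

End AffineDefs.

(* Main.v *)
Require Import Defs.
From HB Require Import structures.
From mathcomp Require Import all_boot all_order all_algebra all_field.
From mathcomp Require Import zify.
From Stdlib Require Import Classical ClassicalEpsilon.
Set Implicit Arguments. Unset Strict Implicit. Unset Printing Implicit Defensive.
Import GRing.Theory.
Local Open Scope ring_scope.


Section Span.
Variable R : comNzRingType.

Inductive spanP (A : R -> Prop) : R -> Prop :=
| sp0 : spanP A 0
| spG c a : A a -> spanP A (c * a)
| spD a b : spanP A a -> spanP A b -> spanP A (a + b).

Lemma spanM A c a : spanP A a -> spanP A (c * a).
Proof.
elim=> [|c' a' Ha|a' b _ Ha _ Hb]; first by rewrite mulr0; exact: sp0.
  by rewrite mulrA; exact: spG.
by rewrite mulrDr; exact: spD.
Qed.

Lemma spanN A a : spanP A a -> spanP A (- a).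
Proof. by move=> H; rewrite -mulN1r; exact: spanM. Qed.

Lemma spanB A a b : spanP A a -> spanP A b -> spanP A (a - b).
Proof. by move=> Ha Hb; apply: spD => //; exact: spanN. Qed.

Lemma spanI A a : A a -> spanP A a.
Proof. by move=> H; rewrite -[a]mul1r; exact: spG. Qed.

Lemma span_trans A B a : spanP A a -> (forall b, A b -> spanP B b) -> spanP B a.
Proof.
move=> H HAB; elim: H => [|c a' Ha|a' b _ Ha _ Hb]; first exact: sp0.
  by apply: spanM; exact: HAB.
exact: spD.
Qed.

Lemma span_mono A B a : spanP A a -> (forall b, A b -> B b) -> spanP B a.
Proof. by move=> H HAB; apply: (span_trans H) => b /HAB; exact: spanI. Qed.

Definition noeth := forall A : R -> Prop, exists L : seq R,
  (forall l, l \in L -> spanP A l) /\ forall a, A a -> spanP (fun x => x \in L) a.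

Lemma span_fin A a : spanP A a ->
  exists L : seq R, (forall l, l \in L -> A l) /\ spanP (fun x => x \in L) a.
Proof.
elim=> [|c a' Ha|a' b _ [L1 [H1 S1]] _ [L2 [H2 S2]]].
- by exists [::]; split => //; exact: sp0.
- exists [:: a']; split; first by move=> l; rewrite inE => /eqP->.
  by apply: spG; rewrite inE.
- exists (L1 ++ L2); split.
    by move=> l; rewrite mem_cat => /orP[/H1|/H2].
  apply: spD; [apply: (span_mono S1)|apply: (span_mono S2)] => x Hx;
  by rewrite mem_cat Hx ?orbT.
Qed.

Lemma noeth_fin : noeth -> forall A : R -> Prop, exists L : seq R,
  (forall l, l \in L -> A l) /\ forall a, A a -> spanP (fun x => x \in L) a.
Proof.
move=> N A; have [L [HL1 HL2]] := N A.
have : exists L' : seq R, (forall l, l \in L' -> A l) /\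
    forall l, l \in L -> spanP (fun x => x \in L') l.
  elim: L HL1 {HL2} => [|l L IH] HL.
    by exists [::]; split.
  have [L1 [H1 S1]] := span_fin (HL l (mem_head _ _)).
  have [L2 [H2 S2]] : exists L' : seq R, (forall l, l \in L' -> A l) /\
    forall l, l \in L -> spanP (fun x => x \in L') l.
    by apply: IH => x Hx; apply: HL; rewrite inE Hx orbT.
  exists (L1 ++ L2); split.
    by move=> x; rewrite mem_cat => /orP[/H1|/H2].
  move=> x; rewrite inE => /orP[/eqP->|/S2 Hx].
    by apply: (span_mono S1) => y Hy; rewrite mem_cat Hy.
  by apply: (span_mono Hx) => y Hy; rewrite mem_cat Hy orbT.
move=> [L' [H1 H2]]; exists L'; split => // a /HL2 Ha.
exact: span_trans Ha H2.
Qed.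

End Span.

Lemma noeth_field (F : fieldType) : noeth F.
Proof.
move=> A; case: (classic (exists a, A a /\ a != 0)) => [[a [Ha a0]]|N].
  exists [:: a]; split; first by move=> l; rewrite inE => /eqP->; exact: spanI.
  move=> b _; rewrite -[b](divfK a0); apply: spG; exact: mem_head.
exists [::]; split => // b Hb; have -> : b = 0.
  by apply/eqP; apply/negPn/negP => nb; apply: N; exists b.
exact: sp0.
Qed.


Lemma ex_min (T : Type) (m : T -> nat) (P : T -> Prop) :
  (exists a, P a) -> exists a, P a /\ forall b, P b -> (m a <= m b)%N.
Proof.
move=> [a Pa]; apply: NNPP => N.
have K : forall n b, (m b <= n)%N -> ~ P b.
  elim=> [|n IH] b Hb Pb; apply: N; exists b; split => // c Pc;
    apply: NNPP => Hc.
    lia.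
  by apply: (IH c) => //; lia.
exact: (K _ a (leqnn _) Pa).
Qed.

Section PolyNoeth.
Variable R : comNzRingType.
Hypothesis NR : noeth R.
Variable A : {poly R} -> Prop.
Hypothesis H : forall L : seq {poly R}, (forall l, l \in L -> spanP A l) ->
  exists a, spanP A a /\ ~ spanP (fun x => x \in L) a.

Definition QQ (L : seq {poly R}) a := spanP A a /\ ~ spanP (fun x => x \in L) a /\
  forall b, spanP A b -> ~ spanP (fun x => x \in L) b -> (size a <= size b)%N.

Definition next L := epsilon (inhabits 0) (QQ L).

Fixpoint fs j := if j is j'.+1 then rcons (fs j') (next (fs j')) else [::].
Definition g j := next (fs j).

Lemma mem_fs j p : p \in fs j <-> exists2 i, (i < j)%N & p = g i.
Proof.
elim: j p => [|j IH] p /=; first by split => // [[]].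
rewrite mem_rcons inE; split.
  case/orP => [/eqP->|Hp]; first by exists j.
  by have [i Hi ->] := proj1 (IH p) Hp; exists i => //; lia.
move=> [i Hi ->]; case: (ltngtP i j) => Hij.
- by apply/orP; right; apply/IH; exists i.
- lia.
- by rewrite Hij eqxx.
Qed.

Lemma Qg_aux j : (forall l, l \in fs j -> spanP A l) -> QQ (fs j) (g j).
Proof.
move=> HA; have [a [Ha Hna]] := H HA.
have [b [[Hb1 Hb2] Hb3]] := @ex_min {poly R} (fun p : {poly R} => size p) (fun a => spanP A a /\
   ~ spanP (fun x => x \in fs j) a) (ex_intro _ a (conj Ha Hna)).
apply: (epsilon_spec (inhabits 0) (QQ (fs j))); exists b; split => //; split => //.
by move=> c Hc1 Hc2; apply: Hb3.
Qed.

Lemma HA j : forall l, l \in fs j -> spanP A l.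
Proof.
elim: j => [|j IH] //= l; rewrite mem_rcons inE => /orP[/eqP->|/IH //].
by have [] := Qg_aux IH.
Qed.

Lemma Qg j : QQ (fs j) (g j).
Proof. exact: Qg_aux (@HA j). Qed.

Lemma span_fs_mono i j a : (i <= j)%N -> spanP (fun x => x \in fs i) a ->
   spanP (fun x => x \in fs j) a.
Proof.
move=> Hij Ha; apply: (span_mono Ha) => x /mem_fs [i' Hi' ->].
by apply/mem_fs; exists i' => //; lia.
Qed.

Lemma size_le i j : (i <= j)%N -> (size (g i) <= size (g j))%N.
Proof.
move=> Hij; have [_ [_ Hmin]] := Qg i; have [Hj [Hnj _]] := Qg j.
apply: Hmin => // Hs; apply: Hnj; exact: span_fs_mono Hs.
Qed.

Lemma g_pos j : (0 < size (g j))%N.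
Proof.
rewrite size_poly_gt0; apply/eqP => E; have [_ [Hn _]] := Qg j.
by apply: Hn; rewrite E; exact: sp0.
Qed.

Definition B N (a : R) := exists2 i, (i < N)%N & a = lead_coef (g i).

Lemma lift_span N d : (forall i, (i < N)%N -> (size (g i) <= d.+1)%N) ->
  forall a, spanP (B N) a -> exists h, [/\ spanP (fun x => x \in fs N) h,
    (size h <= d.+1)%N & h`_d = a].
Proof.
move=> Hd a; elim=> [|c a' [i Hi ->]|a1 a2 _ [h1 [S1 s1 c1]] _ [h2 [S2 s2 c2]]].
- by exists 0; split; [exact: sp0| rewrite size_poly0 | rewrite coef0].
- set s := size (g i); have s1 := g_pos i; have s2 := Hd i Hi.
  exists (c%:P * ('X^(d.+1 - s) * g i)); split.
  + apply: spanM; apply: spanM; apply: spanI; apply/mem_fs; by exists i.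
  + rewrite mul_polyC; apply: leq_trans (size_scale_leq _ _) _.
    apply: leq_trans (size_polyMleq _ _) _; rewrite size_polyXn -/s; lia.
  + rewrite coefCM coefXnM ifF; last by apply/negbTE; rewrite -leqNgt; lia.
    by rewrite lead_coefE -/s; congr (_ * _); congr (_`_ _); lia.
- exists (h1 + h2); split; first exact: spD.
    by apply: leq_trans (size_polyD _ _) _; rewrite geq_max s1 s2.
  by rewrite coefD c1 c2.
Qed.

Definition J (a : R) := exists j, a = lead_coef (g j).

Lemma spanJ a : spanP J a -> exists N, spanP (B N) a.
Proof.
elim=> [|c a' [j ->]|a1 a2 _ [N1 S1] _ [N2 S2]].
- by exists 0%N; exact: sp0.
- by exists j.+1; apply: spG; exists j.
- exists (maxn N1 N2); apply: spD.
    by apply: (span_mono S1) => x [i Hi ->]; exists i => //; lia.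
  by apply: (span_mono S2) => x [i Hi ->]; exists i => //; lia.
Qed.

Lemma contra : False.
Proof.
have [L [HL1 HL2]] := NR J.
have [N HN] : exists N, forall l, l \in L -> spanP (B N) l.
  elim: L HL1 {HL2} => [|l L IH] HL; first by exists 0%N.
  have [N1 S1] := spanJ (HL l (mem_head _ _)).
  have [N2 S2] : exists N, forall l, l \in L -> spanP (B N) l.
    by apply: IH => x Hx; apply: HL; rewrite inE Hx orbT.
  exists (maxn N1 N2) => x; rewrite inE => /orP[/eqP->|/S2 Hx].
    by apply: (span_mono S1) => y [i Hi ->]; exists i => //; lia.
  by apply: (span_mono Hx) => y [i Hi ->]; exists i => //; lia.
have lcN : spanP (B N) (lead_coef (g N)).
  by apply: (span_trans (HL2 _ (ex_intro _ N erefl))).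
set d := (size (g N)).-1.
have sN : size (g N) = d.+1 by rewrite /d prednK //; exact: g_pos.
have Hb : forall i, (i < N)%N -> (size (g i) <= d.+1)%N.
  by move=> i Hi; rewrite -sN; apply: size_le; exact: ltnW.
have [h [Sh sh ch]] := lift_span Hb lcN.
have [QA [QN Qmin]] := Qg N.
have S1 : spanP A (g N - h).
  by apply: spanB => //; apply: span_trans Sh _; exact: HA.
have S2 : ~ spanP (fun x => x \in fs N) (g N - h).
  move=> Hs; apply: QN; rewrite -[g N](subrK h); exact: spD.
have := Qmin _ S1 S2.
have : (size (g N - h)%R <= d)%N.
  apply/leq_sizeP => j Hj; rewrite coefB.
  case: (ltngtP j d) => Hjd; first lia.
  - have h1 : (size (g N) <= j)%N by rewrite sN.
    have h2 : (size h <= j)%N by apply: leq_trans sh _.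
    by rewrite (nth_default 0 h1) (nth_default 0 h2) subrr.
  - by rewrite Hjd ch lead_coefE sN subrr.
lia.
Qed.

End PolyNoeth.

Theorem noeth_poly (R : comNzRingType) : noeth R -> noeth {poly R}.
Proof.
move=> NR A; apply: NNPP => Hn.
apply: (@contra R NR A) => L HL; apply: NNPP => H'; apply: Hn.
exists L; split => // a Ha; apply: NNPP => Hna; apply: H'.
by exists a; split; [exact: spanI|].
Qed.


Section MP.
Variable k : fieldType.

Fixpoint mp (n : nat) : comNzRingType :=
  if n is n'.+1 then ({poly mp n'} : comNzRingType) else (k : comNzRingType).

Fixpoint ev n (xs : seq k) : {rmorphism mp n -> k} :=
  match n return {rmorphism mp n -> k} with
  | 0 => idfun
  | n'.+1 => (horner_eval (head 0 xs) \o map_poly (ev n' (behead xs)))%FUN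
  end.

Lemma noeth_mp n : noeth (mp n).
Proof.
elim: n => [|n IH] /=; first exact: noeth_field.
exact: noeth_poly.
Qed.
End MP.

Section MP2.
Variable k : fieldType.

Fixpoint cst n (c : k) : mp k n :=
  match n return mp k n with 0 => c | n'.+1 => (cst n' c)%:P end.

Fixpoint var n (i : nat) : mp k n :=
  match n return mp k n with
  | 0 => 0
  | n'.+1 => if i is i'.+1 then (var n' i')%:P else 'X end.

Lemma ev_cst n xs c : ev n xs (cst n c) = c.
Proof.
elim: n xs => [|n IH] xs //=.
by rewrite horner_evalE map_polyC hornerC; apply: IH.
Qed.

Lemma ev_var n xs i : (i < n)%N -> ev n xs (var n i) = nth 0 xs i.
Proof.
elim: n xs i => [|n IH] xs [|i] //= Hi.
  by rewrite horner_evalE map_polyX hornerX; case: xs.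
rewrite horner_evalE map_polyC hornerC; case: xs => [|x xs] /=; rewrite IH //; by case: i {Hi} IH.
Qed.

Definition row2seq n (x : 'rV[k]_n) : seq k := [seq x ord0 i | i <- enum 'I_n].

Lemma nth_row2seq n (x : 'rV[k]_n) (i : 'I_n) : nth 0 (row2seq x) i = x ord0 i.
Proof.
by rewrite /row2seq (nth_map i) ?nth_ord_enum // size_enum_ord.
Qed.

End MP2.


Section PF.
Variable k : fieldType.

Lemma polyfun_mp n (p : 'rV[k]_n -> k) : polyfun p ->
  exists P : mp k n, forall x, p x = ev n (row2seq x) P.
Proof.
elim=> [c|i|f g _ [P HP] _ [Q HQ]|f g _ [P HP] _ [Q HQ]|f g _ [P HP] E].
- by exists (cst n c) => x; rewrite ev_cst.
- by exists (var k n i) => x; rewrite ev_var // nth_row2seq.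
- by exists (P + Q) => x; rewrite rmorphD HP HQ.
- by exists (P * Q) => x; rewrite rmorphM HP HQ.
- by exists P => x; rewrite -E HP.
Qed.

Lemma polyfun_fin n (S : ('rV[k]_n -> k) -> Prop) :
  (forall s, S s -> polyfun s) ->
  exists L : list ('rV[k]_n -> k), (forall s, List.In s L -> S s) /\
    forall x, (forall s, S s -> s x = 0) <-> (forall s, List.In s L -> s x = 0).
Proof.
move=> HS.
pose A (P : mp k n) := exists s, S s /\ forall x, s x = ev n (row2seq x) P.
have [LP [H1 H2]] := noeth_fin (@noeth_mp k n) A.
have [L [HL1 HL2]] : exists L : list ('rV[k]_n -> k), (forall s, List.In s L -> S s) /\
    forall l, l \in LP -> exists s, List.In s L /\ forall x, s x = ev n (row2seq x) l.
  elim: LP H1 {H2} => [|l LP IH] HLP; first by exists nil; split.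
  have [L [HL1 HL2]] : exists L : list ('rV[k]_n -> k), (forall s, List.In s L -> S s) /\
    forall l, l \in LP -> exists s, List.In s L /\ forall x, s x = ev n (row2seq x) l.
    by apply: IH => x Hx; apply: HLP; rewrite inE Hx orbT.
  have [s [Ss Es]] := HLP l (mem_head _ _).
  exists (s :: L); split.
    by move=> s' /= [<-|/HL1].
  move=> l'; rewrite inE => /orP[/eqP->|/HL2 [s' [Is' Es']]].
    by exists s; split => //; left.
  by exists s'; split => //; right.
exists L; split => // x; split.
  by move=> Hx s /HL1 /Hx.
move=> Hx s Ss; have [P EP] := polyfun_mp (HS s Ss).
have : spanP (fun y => y \in LP) P by apply: H2; exists s.
rewrite EP; elim=> [|c a Ha|a b _ Ea _ Eb]; first by rewrite rmorph0.
  have [s' [Is' Es']] := HL2 a Ha.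
  by rewrite rmorphM -Es' Hx // mulr0.
by rewrite rmorphD Ea Eb addr0.
Qed.
End PF.


Section Terms.
Variable k : fieldType.
Notation term := (GRing.term k).
Notation formula := (GRing.formula k).

Definition Tprop n (r : nat) (s : 'rV[k]_n -> k) (t : term) :=
  GRing.rterm t /\ forall (env : seq k) (x : 'rV[k]_n),
    (forall j : 'I_n, nth 0 env (r + j)%N = x ord0 j) -> GRing.eval env t = s x.

Lemma polyfun_term n r (s : 'rV[k]_n -> k) : polyfun s -> exists t, Tprop r s t.
Proof.
elim=> [c|i|f g _ [t1 [r1 H1]] _ [t2 [r2 H2]]|f g _ [t1 [r1 H1]] _ [t2 [r2 H2]]|f g _ [t [rt Ht]] E].
- by exists (GRing.Const c); split => // env x _.
- by exists (GRing.Var _ (r + i)%N); split => // env x Hx /=; rewrite Hx.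
- exists (GRing.Add t1 t2); split => [|env x Hx] /=; first by rewrite r1 r2.
  by rewrite (H1 _ _ Hx) (H2 _ _ Hx).
- exists (GRing.Mul t1 t2); split => [|env x Hx] /=; first by rewrite r1 r2.
  by rewrite (H1 _ _ Hx) (H2 _ _ Hx).
- by exists t; split => // env x Hx; rewrite -E (Ht _ _ Hx).
Qed.

Definition tF n r (s : 'rV[k]_n -> k) : term :=
  epsilon (inhabits (GRing.Const 0)) (Tprop r s).

Lemma tF_spec n r (s : 'rV[k]_n -> k) : polyfun s -> Tprop r s (tF r s).
Proof. by move=> Hs; apply: epsilon_spec; exact: polyfun_term. Qed.

Lemma size_row2seq n (x : 'rV[k]_n) : size (row2seq x) = n.
Proof. by rewrite /row2seq size_map size_enum_ord. Qed.

Lemma term_polyfun r (t : term) : GRing.rterm t ->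
  polyfun (fun y : 'rV[k]_r => GRing.eval (row2seq y) t).
Proof.
elim: t => /=.
- move=> j _; case: (ltnP j r) => Hj.
    apply: (PFext (PFcoord k (Ordinal Hj))) => y.
    by rewrite -(nth_row2seq y (Ordinal Hj)).
  by apply: (PFext (PFconst _ 0)) => y; rewrite nth_default // size_row2seq.
- by move=> c _; exact: PFconst.
- by move=> m _; exact: PFconst.
- by move=> t1 IH1 t2 IH2 /andP[/IH1 H1 /IH2 H2]; exact: PFadd.
- move=> t1 IH1 /IH1 H1; apply: (PFext (PFmul (PFconst _ (-1)) H1)) => y.
  by rewrite mulN1r.
- move=> t1 IH1 m /IH1 H1; apply: (PFext (PFmul H1 (PFconst _ m%:R))) => y.
  by rewrite mulr_natr.
- by move=> t1 IH1 t2 IH2 /andP[/IH1 H1 /IH2 H2]; exact: PFmul.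
- by [].
- move=> t1 IH1 m /IH1 H1; elim: m => [|m IHm].
    by apply: (PFext (PFconst _ 1)) => y; rewrite expr0.
  by apply: (PFext (PFmul H1 IHm)) => y; rewrite exprS.
Qed.

Definition conjF (T : Type) (s : list T) (t : T -> term) : formula :=
  foldr (fun a f => GRing.And (GRing.Equal (t a) (GRing.NatConst _ 0)) f)
    (GRing.Bool true) s.

Lemma holds_conjF T (s : list T) t e :
  GRing.holds e (conjF s t) <-> forall a, List.In a s -> GRing.eval e (t a) = 0.
Proof.
elim: s => [|a s IH] /=; first by split.
split.
  by move=> [H1 /IH H2] b [<-|/H2].
by move=> H; split; [apply: H; left|apply/IH => b Hb; apply: H; right].
Qed.

Lemma rform_conjF T (s : list T) t :
  (forall a, List.In a s -> GRing.rterm (t a)) -> GRing.rformula (conjF s t).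
Proof.
elim: s => [|a s IH] //= H; rewrite H /=; last by left.
by apply: IH => b Hb; apply: H; right.
Qed.

Fixpoint exs (l : seq nat) (f : formula) : formula :=
  if l is j :: l' then GRing.Exists j (exs l' f) else f.

Lemma rform_exs l f : GRing.rformula (exs l f) = GRing.rformula f.
Proof. by elim: l. Qed.

Lemma set_nth_size (e : seq k) x : set_nth 0 e (size e) x = rcons e x.
Proof. by elim: e => //= a e ->. Qed.

Lemma holds_exs n r (e : seq k) f : size e = r ->
  GRing.holds e (exs (iota r n) f) <->
  exists xs : seq k, size xs = n /\ GRing.holds (e ++ xs) f.
Proof.
elim: n r e => [|n IH] r e He /=.
  split; first by move=> H; exists [::]; rewrite cats0.
  by move=> [xs [Hs Hh]]; move: Hs Hh; case: xs => // _; rewrite cats0.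
subst r; split.
  move=> [x]; rewrite set_nth_size.
  have Hs' : size (rcons e x) = (size e).+1 by rewrite size_rcons.
  move=> H; have [xs [Hs Hh]] := proj1 (IH _ _ Hs') H.
  by exists (x :: xs); split; [rewrite /= Hs|rewrite -cat_rcons].
move=> [[|x xs] [//= [Hs] Hh]]; exists x; rewrite set_nth_size.
have Hs' : size (rcons e x) = (size e).+1 by rewrite size_rcons.
apply: (proj2 (IH _ _ Hs')).
by exists xs; split => //; rewrite cat_rcons.
Qed.

Lemma In_mem (T : eqType) (s : seq T) x : x \in s -> List.In x s.
Proof. by elim: s => //= a s IH; rewrite inE => /orP[/eqP->|/IH]; auto. Qed.

End Terms.


Section Img.
Variable k : closedFieldType.

Lemma qf_eval_pos e (s : seq (GRing.term k)) :
  GRing.qf_eval e (foldr (fun t => GRing.And (t == 0)%T) GRing.True s) =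
  all (fun t => GRing.eval e t == 0) s.
Proof. by elim: s => //= t s ->. Qed.

Lemma qf_eval_neg e (s : seq (GRing.term k)) :
  GRing.qf_eval e (foldr (fun t => GRing.And (t != 0)%T) GRing.True s) =
  all (fun t => GRing.eval e t != 0) s.
Proof. by elim: s => //= t s ->. Qed.

Lemma qf_eval_dnf e (bcs : seq (seq (GRing.term k) * seq (GRing.term k))) :
  GRing.qf_eval e (GRing.dnf_to_form bcs) =
  has (fun bc => all (fun t => GRing.eval e t == 0) bc.1 &&
                 all (fun t => GRing.eval e t != 0) bc.2) bcs.
Proof.
elim: bcs => //= bc bcs <-.
by rewrite qf_eval_pos qf_eval_neg.
Qed.

End Img.

Section Img2.
Variable k : closedFieldType.

Lemma image_dnf r n (FY : list ('rV[k]_n -> k)) (p : 'I_r -> 'rV[k]_n -> k) :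
  (forall s, List.In s FY -> polyfun s) -> (forall i, polyfun (p i)) ->
  exists bcs, all GRing.dnf_rterm bcs /\ forall y : 'rV[k]_r,
    GRing.qf_eval (row2seq y) (GRing.dnf_to_form bcs) <->
    exists x, (forall s, List.In s FY -> s x = 0) /\ forall i, y ord0 i = p i x.
Proof.
move=> HFY Hp.
pose f2 := conjF (enum 'I_r)
   (fun i => GRing.Add (GRing.Var _ i) (GRing.Opp (tF r (p i)))).
pose phi := exs (iota r n) (GRing.And (conjF FY (tF r)) f2).
have rphi : GRing.rformula phi.
  rewrite rform_exs /= !rform_conjF // => [i _|s Hs] /=.
    by have [] := tF_spec r (Hp i).
  by have [] := tF_spec r (HFY s Hs).
pose psi := GRing.quantifier_elim (@ClosedFieldQE.ex_elim k) phi.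
have wf := @ClosedFieldQE.wf_ex_elim k.
have ok := @ClosedFieldQE.holds_ex_elim k (@GRing.solve_monicpoly k).
have qpsi := GRing.quantifier_elim_wf wf rphi.
exists (GRing.qf_to_dnf psi false); split.
  by apply: GRing.qf_to_dnf_rterm; case/andP: qpsi.
move=> y; rewrite (GRing.qf_to_dnfP _ qpsi).
have Hy := size_row2seq y.
have env1 : forall xs (i : 'I_r), nth 0 (row2seq y ++ xs) i = y ord0 i.
  by move=> xs i; rewrite nth_cat Hy ltn_ord nth_row2seq.
have env2 : forall xs (j : nat), nth 0 (row2seq y ++ xs) (r + j)%N = nth 0 xs j.
  by move=> xs j; rewrite nth_cat Hy ltnNge leq_addr /= addKn.
split.
  move/(GRing.quantifier_elim_rformP wf ok _ rphi).
  move/(holds_exs _ _ Hy) => [xs [Hs [H1 H2]]].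
  exists (\row_j nth 0 xs j).
  have Hx : forall j : 'I_n, nth 0 (row2seq y ++ xs) (r + j)%N = (\row_j nth 0 xs j) ord0 j.
    by move=> j; rewrite env2 mxE.
  split.
    move=> s Hs'; have [_ Ht] := tF_spec r (HFY s Hs').
    by rewrite -(Ht _ _ Hx); apply: (proj1 (holds_conjF _ _ _) H1).
  move=> i; have := proj1 (holds_conjF _ _ _) H2 i (In_mem (mem_enum _ i)).
  have [_ Ht] := tF_spec r (Hp i).
  by rewrite /= (Ht _ _ Hx) env1 => /eqP; rewrite subr_eq0 => /eqP.
move=> [x [H1 H2]].
apply/(GRing.quantifier_elim_rformP wf ok _ rphi).
apply/(holds_exs _ _ Hy); exists (row2seq x); split; first exact: size_row2seq.
have Hx : forall j : 'I_n, nth 0 (row2seq y ++ row2seq x) (r + j)%N = x ord0 j.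
  by move=> j; rewrite env2 nth_row2seq.
split; apply/holds_conjF.
  by move=> s Hs; have [_ Ht] := tF_spec r (HFY s Hs); rewrite (Ht _ _ Hx) H1.
move=> i _; have [_ Ht] := tF_spec r (Hp i).
by rewrite /= (Ht _ _ Hx) env1 H2 subrr.
Qed.

End Img2.


Lemma all_In (T : Type) (a : pred T) (s : seq T) :
  all a s <-> forall x, List.In x s -> a x.
Proof.
elim: s => [|x s IH] /=; first by split.
split; first by move=> /andP[Hx /IH Hs] y [<-|/Hs].
move=> H; rewrite H /=; last by left.
by apply/IH => y Hy; apply: H; right.
Qed.

Section DNF.
Variable k : fieldType.
Variable r : nat.
Variable T : 'rV[k]_r -> Prop.
Hypothesis Tne : exists y, T y.
Hypothesis Tirr : forall P Q : 'rV[k]_r -> k, polyfun P -> polyfun Q ->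
  (forall y, T y -> P y * Q y = 0) ->
  (forall y, T y -> P y = 0) \/ (forall y, T y -> Q y = 0).

Definition ev_t (t : GRing.term k) (y : 'rV[k]_r) := GRing.eval (row2seq y) t.

Definition clause (bc : seq (GRing.term k) * seq (GRing.term k)) y :=
  all (fun t => ev_t t y == 0) bc.1 && all (fun t => ev_t t y != 0) bc.2.

Definition Case1 (C : 'rV[k]_r -> Prop) :=
  exists P, polyfun P /\ (exists y, T y /\ P y <> 0) /\ forall y, T y -> C y -> P y = 0.
Definition Case2 (C : 'rV[k]_r -> Prop) :=
  exists q, polyfun q /\ (exists y, T y /\ q y <> 0) /\ forall y, T y -> q y <> 0 -> C y.

Lemma prod_polyfun (qs : seq (GRing.term k)) : all (@GRing.rterm k) qs ->
  polyfun (fun y => foldr (fun t acc => ev_t t y * acc) 1 qs).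
Proof.
elim: qs => [|t qs IH] /=; first by move=> _; exact: PFconst.
move=> /andP[rt /IH H]; apply: PFmul => //; exact: term_polyfun.
Qed.

Lemma prod_neq0 (qs : seq (GRing.term k)) y :
  (foldr (fun t acc => ev_t t y * acc) 1 qs != 0) = all (fun t => ev_t t y != 0) qs.
Proof.
elim: qs => [|t qs IH] /=; first by rewrite oner_neq0.
by rewrite mulf_eq0 negb_or IH.
Qed.

Lemma clause_case bc : GRing.dnf_rterm bc -> Case1 (clause bc) \/ Case2 (clause bc).
Proof.
case: bc => ps qs /andP[/= rps rqs].
case: (classic (exists t, List.In t ps /\ exists y, T y /\ ev_t t y <> 0)).
  move=> [t [It [y [Ty Hy]]]]; left; exists (ev_t t); split.
    apply: term_polyfun; have := proj1 (@all_In _ _ ps) rps; move=> HH; exact: HH.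
  split; first by exists y.
  move=> y' _ /andP[/= /all_In H _]; exact/eqP/H.
move=> NA.
have B : forall t, List.In t ps -> forall y, T y -> ev_t t y = 0.
  move=> t It y Ty; apply: NNPP => Hn; apply: NA; exists t; split => //.
  by exists y.
pose Q y := foldr (fun t acc => ev_t t y * acc) 1 qs.
case: (classic (exists y, T y /\ Q y <> 0)).
  move=> [y [Ty Hy]]; right; exists Q; split; first exact: prod_polyfun.
  split; first by exists y.
  move=> y' Ty' Hq; apply/andP; split => /=.
    by apply/all_In => t It; apply/eqP; exact: B.
  by rewrite -prod_neq0; apply/eqP.
move=> NQ; left; exists (fun _ => 1); split; first exact: PFconst.
split; first by have [y Ty] := Tne; exists y; split => //; exact/eqP/oner_neq0.
move=> y Ty /andP[_ /=]; rewrite -prod_neq0 => /eqP Hq.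
by exfalso; apply: NQ; exists y.
Qed.

Lemma dnf_case bcs : all GRing.dnf_rterm bcs ->
  Case1 (fun y => has (clause^~ y) bcs) \/ Case2 (fun y => has (clause^~ y) bcs).
Proof.
elim: bcs => [|bc bcs IH] /=.
  move=> _; left; exists (fun _ => 1); split; first exact: PFconst.
  by split => //; have [y Ty] := Tne; exists y; split => //; exact/eqP/oner_neq0.
move=> /andP[rbc /IH [[P [HP [[y0 [Ty0 Py0]] HPv]]]|[q [Hq [Hq1 Hq2]]]]].
- case: (clause_case rbc) => [[P' [HP' [[y1 [Ty1 Py1]] HPv']]]|[q [Hq [Hq1 Hq2]]]].
    left; exists (fun y => P' y * P y); split; first exact: PFmul.
    split.
      apply: NNPP => Hn.
      have : (forall y, T y -> P' y * P y = 0).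
        by move=> y Ty; apply: NNPP => H; apply: Hn; exists y.
      case/(Tirr HP' HP) => H.
        by apply: Py1; exact: H.
      by apply: Py0; exact: H.
    move=> y Ty /orP[/(HPv' _ Ty)->|/(HPv _ Ty)->]; by rewrite ?mul0r ?mulr0.
  right; exists q; split => //; split => // y Ty Hy.
  by rewrite (Hq2 _ Ty Hy).
- right; exists q; split => //; split => // y Ty Hy.
  by rewrite (Hq2 _ Ty Hy) orbT.
Qed.

End DNF.


Lemma polyfun_comp (k : fieldType) n r (P : 'rV[k]_r -> k) (q : 'I_r -> 'rV[k]_n -> k) :
  polyfun P -> (forall i, polyfun (q i)) -> polyfun (fun x => P (\row_i q i x)).
Proof.
move=> HP Hq; elim: HP => [c|i|f g _ H1 _ H2|f g _ H1 _ H2|f g _ H E].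
- exact: PFconst.
- by apply: (PFext (Hq i)) => x; rewrite mxE.
- exact: PFadd.
- exact: PFmul.
- by apply: (PFext H) => x; rewrite E.
Qed.

Lemma zclosed1 (k : fieldType) n (s : 'rV[k]_n -> k) : polyfun s -> zclosed (fun x => s x = 0).
Proof.
move=> Hs; exists (fun f => f = s); split; first by move=> f ->.
by move=> x; split; [move=> H f ->|apply].
Qed.

Theorem theorem6p4 (k : closedFieldType) (m n : nat)
  (G : 'rV[k]_m -> Prop) (e : 'rV[k]_m)
  (mul : 'rV[k]_m -> 'rV[k]_m -> 'rV[k]_m) (inv : 'rV[k]_m -> 'rV[k]_m)
  (X : 'rV[k]_n -> Prop) (act : 'rV[k]_m -> 'rV[k]_n -> 'rV[k]_n)
  (r : nat) (f : 'I_r -> 'rV[k]_n -> k) :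
  affine_algebraic_group G e mul inv ->
  irreducible_variety X ->
  regular_action G e mul X act ->
  generates_invariants G X act f ->
  (forall y, aff_quotient X f y ->
     exists x0, X x0 /\
       forall x, (X x /\ quot_map f x = y) <-> h_orbit G act x0 x) ->
  observable G X act.
Proof.
move=> [_ Ge [_ Ginv] [_ [_ Hinv]] _] [_ _ Xirr] [_ act_e act_mul _] [Hf _] Hfib.
move=> Y HY HYX HYst [x1 [Xx1 nYx1]].
pose p i := proj1_sig (constructive_indefinite_description _ (proj1 (Hf i))).
have Hp : forall i, polyfun (p i).
  by move=> i; have [] := proj2_sig (constructive_indefinite_description _ (proj1 (Hf i))).
have Ep : forall i x, X x -> f i x = p i x.
  by move=> i; have [] := proj2_sig (constructive_indefinite_description _ (proj1 (Hf i))).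
pose pr x := \row_i p i x.
have Eq : forall x, X x -> quot_map f x = pr x.
  by move=> x Xx; apply/rowP => i; rewrite !mxE Ep.
have [SY [HSY1 HSY2]] := HY.
have [FY [HFY1 HFY2]] := polyfun_fin HSY1.
have EY : forall x, Y x <-> forall s, List.In s FY -> s x = 0.
  by move=> x; rewrite HSY2 HFY2.
have [bcs [rbcs Hbcs]] := image_dnf (fun s Hs => HSY1 s (HFY1 s Hs)) Hp.
pose T y := exists x, X x /\ y = pr x.
have Tne : exists y, T y by exists (pr x1), x1.
have Tirr : forall P Q : 'rV[k]_r -> k, polyfun P -> polyfun Q ->
    (forall y, T y -> P y * Q y = 0) ->
    (forall y, T y -> P y = 0) \/ (forall y, T y -> Q y = 0).
  move=> P Q HP HQ HPQ.
  have := Xirr _ _ (zclosed1 (polyfun_comp HP Hp)) (zclosed1 (polyfun_comp HQ Hp)).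
  case.
  - move=> x Xx /=; have : P (pr x) * Q (pr x) = 0 by apply: HPQ; exists x.
    by move/eqP; rewrite mulf_eq0 => /orP[/eqP->|/eqP->]; [left|right].
  - by move=> H; left => y [x [Xx ->]]; exact: H.
  - by move=> H; right => y [x [Xx ->]]; exact: H.
have Cq : forall y, has (fun bc => @clause k r bc y) bcs = GRing.qf_eval (row2seq y) (GRing.dnf_to_form bcs).
  by move=> y; rewrite qf_eval_dnf.
case: (dnf_case Tne Tirr rbcs) => [[P [HP [[y0 [[x0 [Xx0 ->]] Py0]] HPv]]]|[q [Hq [[y0 [[x0 [Xx0 ->]] qy0]] Hqv]]]].
- exists (fun x => P (quot_map f x)); split.
  + split.
      exists (fun x => P (pr x)); split; first exact: polyfun_comp.
      by move=> x Xx; rewrite Eq.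
    move=> g x Gg Xx; congr P; apply/rowP => i; rewrite !mxE.
    by have [_ ->] := Hf i.
  + by exists x0; split => //; rewrite Eq.
  + move=> y Yy; have Xy := HYX _ Yy; rewrite Eq //.
    apply: HPv; first by exists y.
    rewrite Cq; apply/Hbcs; exists y; split; first exact/EY.
    by move=> i; rewrite mxE.
- exfalso.
  have := Xirr Y (fun x => q (pr x) = 0) HY (zclosed1 (polyfun_comp Hq Hp)).
  case.
  + move=> x Xx; case: (classic (q (pr x) = 0)) => Hqx; [by right|left].
    have := Hqv _ (ex_intro _ x (conj Xx erefl)) Hqx.
    rewrite Cq => /Hbcs [x' [Hx'1 Hx'2]].
    have Yx' : Y x' by apply/EY.
    have Xx' := HYX _ Yx'.
    have Eqx : quot_map f x' = quot_map f x.
      by rewrite !Eq //; apply/rowP => i; rewrite mxE -Hx'2.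
    have [z [Xz Hz]] : exists x0, X x0 /\ forall x2, (X x2 /\ quot_map f x2 = quot_map f x) <-> h_orbit G act x0 x2.
      by apply: Hfib => P0 _ HP0; apply: HP0.
    have [g [Gg ->]] := proj1 (Hz x) (conj Xx erefl).
    have [g' [Gg' Ex']] := proj1 (Hz x') (conj Xx' Eqx).
    have -> : z = act (inv g') x'.
      rewrite Ex' -act_mul //; last exact: Ginv.
      by have [-> _] := Hinv g' Gg'; rewrite act_e.
    by apply: (HYst) => //; apply: (HYst) => //; exact: Ginv.
  + by move=> H; apply: nYx1; exact: H.
  + by move=> H; apply: qy0; exact: H.
Qed.
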